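(* Let $p>3$ be a prime, $a,m\in\mathbb Z_p$ with $m\not\equiv0\pmod p$ and $a\not\equiv0,\pm1,-2\pmod p$, and put $A_k=\binom ak\binom{-1-a}k\binom{2k}k$. Then $$\sum_{k=0}^{p-3}\frac{A_k}{m^k(k+2)}\equiv\frac{4-m}{6(a-1)(a+2)}\sum_{k=0}^{p-1}\frac{kA_k}{m^k}+\frac{m-6}{6(a-1)(a+2)}\sum_{k=0}^{p-1}\frac{A_k}{m^k}+\frac{2a(a+1)-m}{6(a-1)(a+2)}\sum_{k=0}^{p-2}\frac{A_k}{m^k(k+1)}\pmod{p^3}.$$
   Context: $\mathbb Z_p$ denotes the set of rational numbers whose denominator is not divisible by $p$; for $u,v\in\mathbb Z_p$, $u\equiv v\pmod{p^r}$ means $(u-v)/p^r\in\mathbb Z_p$. For $a$ rational, $\binom a0=1$ and $\binom ak=\frac{a(a-1)\cdots(a-k+1)}{k!}$ for $k\ge1$. *)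

(* Defs.v *)
From HB Require Import structures.
From mathcomp Require Import all_boot all_order all_algebra.
Set Implicit Arguments. Unset Strict Implicit. Unset Printing Implicit Defensive.
Import Order.TTheory GRing.Theory Num.Theory.
Local Open Scope ring_scope.

Definition in_Zp (p : nat) (q : rat) : bool := ~~ (p %| `|denq q|)%N.

Definition congr_mod_pow (p r : nat) (u v : rat) : Prop :=
  in_Zp p ((u - v) / (p ^ r)%:R).

Definition binq (a : rat) (k : nat) : rat :=
  (\prod_(i < k) (a - i%:R)) / (k`!)%:R.

Definition Ak (a : rat) (k : nat) : rat :=
  binq a k * binq (-1 - a) k * ('C(k.*2, k))%:R.

(* Main.v *)
Require Import Defs.
From HB Require Import structures.
From mathcomp Require Import all_boot all_order all_algebra.
From mathcomp Require Import ring lra zify.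
Import Order.TTheory GRing.Theory Num.Theory.
Local Open Scope ring_scope.

Section Zp.
Variable p : nat.
Hypothesis pP : prime p.

Lemma ndvd1 : ~~ (p %| 1)%N.
Proof. by rewrite dvdn1 neq_ltn (prime_gt1 pP) orbT. Qed.

Lemma Zp_frac (n d : int) : ~~ (p %| `|d|)%N -> in_Zp p (n%:~R / d%:~R).
Proof.
rewrite /in_Zp; case: divqP => [_|k x k0].
  by move=> _; exact: ndvd1.
apply: contra; rewrite abszM => H; exact: dvdn_mull.
Qed.

Lemma Zp_fracP x : in_Zp p x -> exists n d : int, ~~ (p %| `|d|)%N /\ x = n%:~R / d%:~R.
Proof. move=> H; exists (numq x), (denq x); split=> //; by rewrite divq_num_den. Qed.

Lemma Zp_int (n : int) : in_Zp p n%:~R.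
Proof. by have := Zp_frac n 1 ndvd1; rewrite ?rmorph1 ?divr1. Qed.

Lemma Zp_nat (n : nat) : in_Zp p n%:R.
Proof. by have := Zp_int n; rewrite pmulrn. Qed.

Lemma ndvdM (d1 d2 : int) : ~~ (p %| `|d1|)%N -> ~~ (p %| `|d2|)%N -> ~~ (p %| `|(d1 * d2)%R|)%N.
Proof. by move=> h1 h2; rewrite abszM Euclid_dvdM // negb_or h1 h2. Qed.

Lemma Zp_add x y : in_Zp p x -> in_Zp p y -> in_Zp p (x + y).
Proof.
move=> /Zp_fracP [n1 [d1 [h1 ->]]] /Zp_fracP [n2 [d2 [h2 ->]]].
have d10 : d1%:~R != 0 :> rat by rewrite intr_eq0; apply: contraNneq h1 => ->.
have d20 : d2%:~R != 0 :> rat by rewrite intr_eq0; apply: contraNneq h2 => ->.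
have -> : n1%:~R / d1%:~R + n2%:~R / d2%:~R = (n1 * d2 + n2 * d1)%:~R / (d1 * d2)%:~R :> rat.
  by rewrite !intrD !intrM; field; apply/andP.
exact/Zp_frac/ndvdM.
Qed.

Lemma Zp_mul x y : in_Zp p x -> in_Zp p y -> in_Zp p (x * y).
Proof.
move=> /Zp_fracP [n1 [d1 [h1 ->]]] /Zp_fracP [n2 [d2 [h2 ->]]].
have -> : n1%:~R / d1%:~R * (n2%:~R / d2%:~R) = (n1 * n2)%:~R / (d1 * d2)%:~R :> rat.
  by rewrite !intrM invfM; ring.
exact/Zp_frac/ndvdM.
Qed.

Lemma Zp_opp x : in_Zp p x -> in_Zp p (- x).
Proof. by move=> h; rewrite -mulN1r; apply: Zp_mul => //; rewrite -[-1]/((-1)%:~R) Zp_int. Qed.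

Lemma Zp_sub x y : in_Zp p x -> in_Zp p y -> in_Zp p (x - y).
Proof. by move=> hx hy; apply: Zp_add => //; apply: Zp_opp. Qed.

Lemma Zp_exp x n : in_Zp p x -> in_Zp p (x ^+ n).
Proof. by move=> h; elim: n => [|n IH]; rewrite ?expr0 ?exprS ?(Zp_nat 1) ?Zp_mul. Qed.

Lemma Zp_inv_nat (n : nat) : ~~ (p %| n)%N -> in_Zp p (n%:R)^-1.
Proof. by move=> h; have := Zp_frac 1 n h; rewrite ?rmorph1 div1r pmulrn. Qed.

Lemma Zp_inv x : in_Zp p x -> ~ in_Zp p (x / p%:R) -> in_Zp p x^-1.
Proof.
move=> /Zp_fracP [n [d [h ->]]] hn.
case hp: (p %| `|n|)%N.
  exfalso; apply: hn.
  have: (p%:Z %| n)%Z by rewrite dvdzE.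
  case/dvdzP => t ->.
  have p0 : p%:R != 0 :> rat by rewrite pnatr_eq0 -lt0n prime_gt0.
  have d0 : d%:~R != 0 :> rat by rewrite intr_eq0; apply: contraNneq h => ->.
  have -> : (t * p)%:~R / d%:~R / p%:R = t%:~R / d%:~R :> rat.
    by rewrite intrM; field; apply/andP.
  exact: Zp_frac.
by rewrite invf_div; apply: Zp_frac; rewrite hp.
Qed.

End Zp.


Section Res.
Variable p : nat.
Hypothesis pP : prime p.

Lemma Zp_res x : in_Zp p x -> exists i, (i < p)%N /\ in_Zp p ((x - i%:R)/p%:R).
Proof.
move=> /(Zp_fracP) [n [d [h ->]]].
have cop : coprimez d p.
  by rewrite coprimezE coprime_sym prime_coprime.
have [u [v uv]] := Bezoutz d p.
rewrite (eqP cop) in uv.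
have p0 : (p%:Z != 0).
  by rewrite eqz_nat -lt0n prime_gt0.
have [i ri] : exists i : nat, ((n * u) %% p)%Z = i%:Z.
  by exists `|((n * u) %% p)%Z|%N; rewrite gez0_abs // modz_ge0.
exists i; split.
  have := ltz_pmod (n * u) (d := p%:Z); rewrite ri ltz_nat; apply.
  by rewrite ltz_nat prime_gt0.
have e := divz_eq (n * u) p%:Z; rewrite ri in e.
have pr0 : p%:R != 0 :> rat by rewrite pnatr_eq0 -lt0n prime_gt0.
have d0 : d%:~R != 0 :> rat by rewrite intr_eq0; apply: contraNneq h => ->.
have -> : ((n%:~R / d%:~R - i%:R) / p%:R : rat)
   = (n * v + ((n * u) %/ p)%Z * d)%:~R / d%:~R.
  have e' : (n%:~R * u%:~R : rat) = ((n * u) %/ p)%Z%:~R * p%:R + i%:R.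
    by rewrite -intrM {1}e intrD intrM -!pmulrn.
  have uv' : (u%:~R * d%:~R + v%:~R * p%:R : rat) = 1.
    by rewrite pmulrn -!intrM -intrD uv.
  apply: (mulfI pr0); apply: (mulfI d0).
  rewrite intrD !intrM.
  have -> : (i%:R : rat) = n%:~R * u%:~R - ((n * u) %/ p)%Z%:~R * p%:R by rewrite e'; ring.
  have E1 : (v%:~R : rat) * p%:R = 1 - u%:~R * d%:~R by apply/eqP; rewrite eq_sym subr_eq addrC uv'.
  have Ev : (v%:~R : rat) = (1 - u%:~R * d%:~R) / p%:R by rewrite -E1; field.
  by rewrite Ev; field; rewrite d0 pr0.
exact: (Zp_frac p pP _ _ h).
Qed.

End Res.


Lemma binCn k : ('C(k.+1.*2, k.+1) * k.+1 = 2 * (k.*2.+1) * 'C(k.*2, k))%N.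
Proof.
have h1 := mul_bin_diag (k.+1.*2) k.
have h2 := mul_bin_diag (k.*2.+1) k.
have h3 : 'C(k.*2.+1, k.+1) = 'C(k.*2.+1, k).
  rewrite -[in RHS](bin_sub (n:=k.*2.+1) (m:=k)); last by lia.
  congr 'C(_, _); lia.
rewrite h3 in h2.
rewrite doubleS /= in h1.
rewrite doubleS.
move: h1 h2; set X := 'C(_, k.+1); set Y := 'C(k.*2.+1, k); set Z := 'C(k.*2, k).
rewrite -!mul2n. nia.
Qed.

Lemma binqS a k : binq a k.+1 = binq a k * (a - k%:R) / (k.+1)%:R.
Proof.
rewrite /binq big_ord_recr /= factS natrM.
have f0 : (k`!)%:R != 0 :> rat by rewrite pnatr_eq0 -lt0n fact_gt0.
have k0 : (k.+1)%:R != 0 :> rat by rewrite pnatr_eq0.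
field; by rewrite f0 andbT addrC natr1 pnatr_eq0.
Qed.

Lemma AkS a k : Ak a k.+1 * (k.+1)%:R ^+ 3
   = 2 * (2 * k%:R + 1) * (k%:R - a) * (k%:R + a + 1) * Ak a k.
Proof.
rewrite /Ak !binqS.
have k0 : (k.+1)%:R != 0 :> rat by rewrite pnatr_eq0.
have C : ('C(k.+1.*2, k.+1))%:R = 2 * (2 * k%:R + 1) * ('C(k.*2, k))%:R / (k.+1)%:R :> rat.
  apply: (mulIf k0); rewrite mulfVK // -[X in X = _]natrM binCn !natrM.
  have -> : (k.*2.+1)%:R = 2 * k%:R + 1 :> rat by rewrite -addn1 -mul2n natrD natrM.

  done.
rewrite C; field; by rewrite addrC natr1 pnatr_eq0.
Qed.


Definition Qp (P a m : rat) : rat :=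
  - 120 + 10 * m + 60 * a - 14 * a * m + 60 * a * a - 14 * a * a * m + 188 * P - 8 * P * m - 4 * P * a + 4 * P * a * m - 4 * P * a * a + 4 * P * a * a * m + 24 * P * P - 10 * P * P * m - 48 * P * P * a + 12 * P * P * a * m - 48 * P * P * a * a + 12 * P * P * a * a * m - 172 * P * P * P + 8 * P * P * P * m + 16 * P * P * P * a - 6 * P * P * P * a * m + 16 * P * P * P * a * a - 6 * P * P * P * a * a * m + 96 * P * P * P * P - 16 * P * P * P * P * P.

Definition Gt (a m : rat) (k : nat) : rat :=
  Ak a k / (m ^+ k * (k.+2)%:R)
  - (4 - m) / (6 * (a - 1) * (a + 2)) * (k%:R * Ak a k / m ^+ k)
  - (m - 6) / (6 * (a - 1) * (a + 2)) * (Ak a k / m ^+ k)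
  - (2 * a * (a + 1) - m) / (6 * (a - 1) * (a + 2)) * (Ak a k / (m ^+ k * (k.+1)%:R)).

Definition Ft (a m : rat) (k : nat) : rat :=
  Ak a k / m ^+ k * (m * k%:R ^+ 3 / (6 * (a - 1) * (a + 2) * (k.+1)%:R)
                     - m * k%:R ^+ 2 / (6 * (a - 1) * (a + 2))).

Lemma nz1 k : 1 + k%:R != 0 :> rat.
Proof. by rewrite addrC natr1 pnatr_eq0. Qed.

Lemma nz2 k : 2 + k%:R != 0 :> rat.
Proof. by rewrite -[2]/(2%:R) -natrD pnatr_eq0. Qed.

Lemma AkS' a k : Ak a k.+1 = 2 * (2 * k%:R + 1) * (k%:R - a) * (k%:R + a + 1) * Ak a k / (k.+1)%:R ^+ 3.
Proof. by rewrite -AkS mulfK // expf_neq0 // pnatr_eq0. Qed.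

Lemma stepG a m k : m != 0 -> a - 1 != 0 -> a + 2 != 0 ->
  Gt a m k = Ft a m k.+1 - Ft a m k.
Proof.
move=> m0 a1 a2.
rewrite /Gt /Ft AkS' [m ^+ k.+1]exprS.
field.
by rewrite a1 a2 nz1 nz2 expf_neq0 // m0.
Qed.

Lemma sumG a m n : m != 0 -> a - 1 != 0 -> a + 2 != 0 ->
  \sum_(0 <= k < n) Gt a m k = Ft a m n.
Proof.
move=> m0 a1 a2.
rewrite (@telescope_sumr_eq _ 0 n (Ft a m)) //; last by move=> k _; apply: stepG.
have -> : Ft a m 0 = 0 by rewrite /Ft; field; rewrite a1 a2.
by rewrite subr0.
Qed.

Lemma key a m q : m != 0 -> a - 1 != 0 -> a + 2 != 0 ->
  \sum_(0 <= k < q.+2) Ak a k / (m ^+ k * (k.+2)%:R)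
  - ((4 - m) / (6 * (a - 1) * (a + 2)) * (\sum_(0 <= k < q.+4) k%:R * Ak a k / m ^+ k)
     + (m - 6) / (6 * (a - 1) * (a + 2)) * (\sum_(0 <= k < q.+4) Ak a k / m ^+ k)
     + (2 * a * (a + 1) - m) / (6 * (a - 1) * (a + 2)) *
        (\sum_(0 <= k < q.+3) Ak a k / (m ^+ k * (k.+1)%:R)))
  = Ak a q.+2 / m ^+ q.+2 * Qp (q.+4)%:R a m /
     (6 * (a - 1) * (a + 2) * ((q.+4)%:R + 1) * (m * ((q.+4)%:R - 1) ^+ 3)).
Proof.
move=> m0 a1 a2.
have H := sumG a m q.+4 m0 a1 a2.
rewrite /Gt !sumrB -!mulr_sumr in H.
rewrite [\sum_(0 <= k < q.+4) Ak a k / (m ^+ k * (k.+2)%:R)]big_nat_recr //= in H.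
rewrite [\sum_(0 <= k < q.+3) Ak a k / (m ^+ k * (k.+2)%:R)]big_nat_recr //= in H.
rewrite [\sum_(0 <= k < q.+4) Ak a k / (m ^+ k * (k.+1)%:R)]big_nat_recr //= in H.
set A := \sum_(0 <= k < q.+2) _ in H *.
set B := \sum_(0 <= k < q.+3) _ in H *.
set S2 := \sum_(0 <= k < q.+4) _ * _ / _ in H *.
set S3 := \sum_(0 <= k < q.+4) _ / _ in H *.
set g := (2 * a * (a + 1) - m) / (6 * (a - 1) * (a + 2)) in H *.
have -> : A - ((4 - m) / (6 * (a - 1) * (a + 2)) * S2 + (m - 6) / (6 * (a - 1) * (a + 2)) * S3 + g * B)
  = Ft a m q.+4 - Ak a q.+2 / (m ^+ q.+2 * q.+4%:R) - Ak a q.+3 / (m ^+ q.+3 * q.+1.+4%:R)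
    + g * (Ak a q.+3 / (m ^+ q.+3 * q.+4%:R)) by rewrite -H; ring.
rewrite /Ft /g (AkS' a q.+3) (AkS' a q.+2) /Qp [m ^+ q.+4]exprS [m ^+ q.+3]exprS.
have q0 : 0 <= q%:R :> rat := ler0n _ _.
have n3 : 4 + q%:R - 1 != 0 :> rat by apply: lt0r_neq0; lra.
have n5 : 4 + q%:R + 1 != 0 :> rat by apply: lt0r_neq0; lra.
have n4 : 4 + q%:R != 0 :> rat by apply: lt0r_neq0; lra.
field.
by rewrite n3 n4 n5 m0 a1 a2 expf_neq0.
Qed.



Ltac zpt pP := repeat match goal with
 | |- _ => assumption
 | |- is_true (in_Zp _ (_ + _)) => apply: (Zp_add _ pP)
 | |- is_true (in_Zp _ (_ * _)) => apply: (Zp_mul _ pP)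
 | |- is_true (in_Zp _ (- _)) => apply: (Zp_opp _ pP)
 | |- is_true (in_Zp _ (_ ^+ _)) => apply: (Zp_exp _ pP)
 | |- is_true (in_Zp _ (_ %:R)) => apply: (Zp_nat _ pP)
 end.

Lemma ndvd_fact p n : prime p -> (n < p)%N -> ~~ (p %| n`!)%N.
Proof.
move=> pP; elim: n => [|n IH] h; first exact: ndvd1.
rewrite factS Euclid_dvdM // negb_or IH ?andbT; last by apply: ltnW.
by apply/negP => /dvdn_leq => /(_ (ltn0Sn n)); rewrite leqNgt h.
Qed.

Lemma prod_Zp p x n i : prime p -> in_Zp p x -> (i < n)%N -> in_Zp p ((x - i%:R) / p%:R) ->
  in_Zp p ((\prod_(j < n) (x - (j : nat)%:R)) / p%:R).
Proof.
move=> pP xZ hi h.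
rewrite (bigD1 (Ordinal hi)) //= mulrAC.
apply: Zp_mul => //.
apply: (big_ind (fun y => in_Zp p y)).
- exact: (Zp_nat p pP 1).
- exact: Zp_mul.
- by move=> j _; apply: Zp_sub => //; apply: Zp_nat.
Qed.

Lemma Qp_Zp p a m P : prime p -> in_Zp p a -> in_Zp p m -> in_Zp p P -> in_Zp p (Qp P a m).
Proof. move=> pP aZ mZ PZ; rewrite /Qp; zpt pP. Qed.

Lemma bin_dvd q : prime q.+4 -> (q.+4 %| 'C((q.+2).*2, q.+2))%N.
Proof.
move=> pP.
have hle : (q.+2 <= (q.+2).*2)%N by lia.
have h := bin_fact hle.
have e : ((q.+2).*2 - q.+2 = q.+2)%N by lia.
rewrite e in h.
have d : (q.+4 %| (q.+2).*2`!)%N by apply: dvdn_fact; lia.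
rewrite -h Euclid_dvdM // in d.
have nf : ~~ (q.+4 %| (q.+2)`!)%N by apply: ndvd_fact.
by move: d; rewrite Euclid_dvdM // (negPf nf) !orbF.
Qed.

Theorem theorem6p1 (p : nat) (a m : rat) :
  prime p -> (3 < p)%N ->
  in_Zp p a -> in_Zp p m ->
  ~ congr_mod_pow p 1 m 0 ->
  ~ congr_mod_pow p 1 a 0 -> ~ congr_mod_pow p 1 a 1 ->
  ~ congr_mod_pow p 1 a (-1) -> ~ congr_mod_pow p 1 a (-2) ->
  congr_mod_pow p 3
    (\sum_(0 <= k < (p - 3).+1) Ak a k / (m ^+ k * (k.+2)%:R))
    ((4 - m) / (6 * (a - 1) * (a + 2)) *
        (\sum_(0 <= k < p) k%:R * Ak a k / m ^+ k)
     + (m - 6) / (6 * (a - 1) * (a + 2)) *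
        (\sum_(0 <= k < p) Ak a k / m ^+ k)
     + (2 * a * (a + 1) - m) / (6 * (a - 1) * (a + 2)) *
        (\sum_(0 <= k < (p - 2).+1) Ak a k / (m ^+ k * (k.+1)%:R))).
Proof.
move=> pP p3 aZ mZ hm h0 h1 hm1 hm2.
rewrite /congr_mod_pow expn1 in hm h0 h1 hm1 hm2 *.
rewrite subr0 in hm h0; rewrite opprK in hm1 hm2.
have [q pq] : exists q, p = q.+4 by exists (p - 4)%N; lia.
subst p.
have -> : ((q.+4 - 3).+1 = q.+2)%N by lia.
have -> : ((q.+4 - 2).+1 = q.+3)%N by lia.
have P0 : (q.+4)%:R != 0 :> rat by rewrite pnatr_eq0.
have m0 : m != 0 by apply: contra_notN hm => /eqP ->; rewrite mul0r; exact: (Zp_nat _ pP 0).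
have a1 : a - 1 != 0 by apply: contra_notN h1 => /eqP ->; rewrite mul0r; exact: (Zp_nat _ pP 0).
have a2 : a + 2 != 0 by apply: contra_notN hm2 => /eqP ->; rewrite mul0r; exact: (Zp_nat _ pP 0).
rewrite key //.
have P0' : 4 + q%:R != 0 :> rat by apply: lt0r_neq0; have := ler0n rat q; lra.
have [i [hi hai]] := @Zp_res q.+4 pP a aZ.
have iq : (i < q.+2)%N.
  rewrite ltnNge; apply/negP => hle.
  have : i = q.+2 \/ i = q.+3 by move: hi hle; clear; lia.
  case=> ?; subst i.
  - apply: hm2.
    have -> : (a - -2) / (q.+4)%:R = (a - (q.+2)%:R) / (q.+4)%:R + 1 by field; rewrite P0'.
    zpt pP.
  - apply: hm1.
    have -> : (a + 1) / (q.+4)%:R = (a - (q.+3)%:R) / (q.+4)%:R + 1 by field; rewrite P0'.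
    zpt pP.
have i2 : (2 <= i)%N.
  rewrite leqNgt; apply/negP => hlt.
  have : i = 0%N \/ i = 1%N by move: hlt; clear; lia.
  case=> ?; subst i.
    by apply: h0; move: hai; rewrite (_ : (0%:R : rat) = 0) // subr0.
  by apply: h1; exact: hai.
have hb : in_Zp q.+4 ((-1 - a - (q.+3 - i)%:R) / (q.+4)%:R).
  have -> : (-1 - a - (q.+3 - i)%:R) / (q.+4)%:R = - ((a - i%:R) / (q.+4)%:R) - 1.
    by rewrite natrB; [field; rewrite P0' | move: iq; clear; lia].
  zpt pP.
have hPa := prod_Zp _ _ _ _ pP aZ iq hai.
have jq : (q.+3 - i < q.+2)%N by move: i2; clear; lia.
have hPb : in_Zp q.+4 ((\prod_(j < q.+2) (-1 - a - (j : nat)%:R)) / q.+4%:R).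
  by apply: (prod_Zp _ _ _ _ pP _ jq hb); zpt pP.
have [t ht] := dvdnP (bin_dvd _ pP).
have f0 : ((q.+2)`!)%:R != 0 :> rat by rewrite pnatr_eq0 -lt0n fact_gt0.
have -> : Ak a q.+2 / m ^+ q.+2 * Qp q.+4%:R a m /
     (6 * (a - 1) * (a + 2) * (q.+4%:R + 1) * (m * (q.+4%:R - 1) ^+ 3)) /
     (q.+4 ^ 3)%:R
  = (\prod_(j < q.+2) (a - (j : nat)%:R) / q.+4%:R) * (\prod_(j < q.+2) (-1 - a - (j : nat)%:R) / q.+4%:R)
    * t%:R * ((q.+2)`!)%:R^-1 * ((q.+2)`!)%:R^-1 * (m^-1) ^+ q.+2 * Qp q.+4%:R a m
    * (6%:R)^-1 * (a - 1)^-1 * (a - -2)^-1 * (q.+4).+1%:R^-1 * m^-1 * ((q.+3)%:R^-1) ^+ 3.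
  rewrite /Ak /binq ht natrM natrX !exprVn.
  move: f0 (Qp _ _ _) (\prod_(j < q.+2) (a - (j : nat)%:R)) (\prod_(j < q.+2) (-1 - a - (j : nat)%:R)).
  move: ((q.+2)`!)%:R => F f0 Q X Y.
  field.
  have n3 : 3 + q%:R != 0 :> rat by apply: lt0r_neq0; have := ler0n rat q; lra.
  have n5 : 5 + q%:R != 0 :> rat by apply: lt0r_neq0; have := ler0n rat q; lra.
  by rewrite n3 n5 m0 a1 a2 P0' f0 expf_neq0.
have iF : in_Zp q.+4 ((q.+2)`!%:R^-1).
  by apply: (Zp_inv_nat _ pP); apply: ndvd_fact.
have im : in_Zp q.+4 m^-1 by apply: (Zp_inv _ pP).
have ia1 : in_Zp q.+4 (a - 1)^-1 by apply: (Zp_inv _ pP) => //; zpt pP.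
have ia2 : in_Zp q.+4 (a - -2)^-1 by apply: (Zp_inv _ pP) => //; zpt pP.
have i5 : in_Zp q.+4 (q.+1.+4%:R)^-1.
  apply: (Zp_inv_nat _ pP); have -> : (q.+1.+4 = q.+4 + 1)%N by rewrite addn1.
  rewrite dvdn_addr //; exact: ndvd1.
have i3 : in_Zp q.+4 (q.+3%:R)^-1.
  apply: (Zp_inv_nat _ pP); apply/negP => /dvdn_leq => /(_ isT); by rewrite ltnn.
have i6 : in_Zp q.+4 (6%:R)^-1.
  apply: (Zp_inv_nat _ pP).
  have e6 : (6 = 2 * 3)%N by [].
  have d2 : ~~ (q.+4 %| 2)%N by apply/negP => /(dvdn_leq (isT : (0 < 2)%N)).
  have d3 : ~~ (q.+4 %| 3)%N by apply/negP => /(dvdn_leq (isT : (0 < 3)%N)).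
  by rewrite e6 (Euclid_dvdM 2 3 pP) negb_or d2.
have iQ : in_Zp q.+4 (Qp q.+4%:R a m).
  by apply: Qp_Zp => //; apply: (Zp_nat _ pP).
zpt pP.
Qed.
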